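(* Let $\Lambda,\hat x,\mathcal R,V$ be as in the context and let $[u]\in\dot{\mathcal H}^1$ satisfy $u(L_\Lambda x)=u(x)$ for all $x\in\Lambda$. Let $f_u=-\mathrm{div}_{\mathcal R}(\nabla^2V(0)[D_{\mathcal R}u])$. Then, provided the respective sums converge absolutely, $$\sum_{x\in\Lambda}f_u(x)=0,\qquad\sum_{x\in\Lambda}f_u(x)\,x=0,\qquad\sum_{x\in\Lambda}f_u(x)\,x\otimes x=c\,\mathrm{Id}\ \text{ for some }c\in\mathbb{R}.$$
   Context: $\Lambda=A_\Lambda\mathbb{Z}^2$ is the square lattice ($A_\Lambda=\mathrm{Id}$) or triangular lattice ($A_\Lambda=\begin{pmatrix}1&\frac12\\0&\frac{\sqrt3}{2}\end{pmatrix}$); $Q_\Lambda$ is the rotation through $\pi/2$ (square) or $2\pi/3$ (triangular). $\hat x\in\mathbb{R}^2\setminus\Lambda$ is the centre of a unit square with vertices in $\Lambda$ (square) or the centroid of an equilateral triangle of side $1$ with vertices in $\Lambda$ (triangular), and $L_\Lambda x=Q_\Lambda(x-\hat x)+\hat x$ (so $L_\Lambda\Lambda=\Lambda$). $\mathcal R\subset\Lambda\setminus\{0\}$ is finite with $\mathrm{span}_\mathbb{Z}\mathcal R=\Lambda$ and $Q_\Lambda\mathcal R=\mathcal R$. $V\in C^6(\mathbb{R}^{\mathcal R},\mathbb{R})$ with $V(A)=V((A_{Q_\Lambda\rho})_{\rho\in\mathcal R})$, periodic with minimal period $p>0$ in each component, and lattice stable ($\exists c_0>0$: $\sum_x\sum_{\rho,\sigma}\nabla^2V(0)_{\rho\sigma}D_\rho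 vD_\sigma v\ge c_0\|D_{\mathcal R}v\|^2_{\ell^2}$ for all $v\in\dot{\mathcal H}^1$). $D_\rho u(x)=u(x+\rho)-u(x)$, $D_{\mathcal R}u=(D_\rho u)_{\rho\in\mathcal R}$, $\mathrm{div}_{\mathcal R}g(x)=-\sum_\rho(g_\rho(x-\rho)-g_\rho(x))$, and $\dot{\mathcal H}^1=\{u:\Lambda\to\mathbb{R}:D_{\mathcal R}u\in\ell^2(\Lambda)\}/\mathbb{R}$. *)

(* Defs.v *)
From Stdlib Require Import Reals ZArith List.
From Coquelicot Require Import Coquelicot.
Open Scope R_scope.

Inductive lattice_kind := Square | Triangular.

(** Lattice points are encoded by their integer coordinates z = (m,n),
    representing the point A_Lambda z of R^2. *)
Definition emb (k : lattice_kind) (z : Z * Z) : R * R :=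
  match k with
  | Square => (IZR (fst z), IZR (snd z))
  | Triangular => (IZR (fst z) + IZR (snd z) / 2, IZR (snd z) * sqrt 3 / 2)
  end.

Definition in_lattice (k : lattice_kind) (p : R * R) : Prop :=
  exists z : Z * Z, emb k z = p.

(** Q_Lambda: rotation through pi/2 (square) or 2 pi/3 (triangular). *)
Definition Qrot (k : lattice_kind) (p : R * R) : R * R :=
  match k with
  | Square => (- snd p, fst p)
  | Triangular => (- (1/2) * fst p - (sqrt 3 / 2) * snd p,
                   (sqrt 3 / 2) * fst p - (1/2) * snd p)
  end.

Definition padd (p q : R * R) : R * R := (fst p + fst q, snd p + snd q).
Definition psub (p q : R * R) : R * R := (fst p - fst q, snd p - snd q).
Definition pscal (c : R) (p : R * R) : R * R := (c * fst p, c * snd p).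
Definition sqdist (p q : R * R) : R := (fst p - fst q)^2 + (snd p - snd q)^2.
Definition rot90 (p : R * R) : R * R := (- snd p, fst p).

Definition is_centre (k : lattice_kind) (xh : R * R) : Prop :=
  match k with
  | Square =>
      exists p e : R * R,
        in_lattice k p /\ fst e ^ 2 + snd e ^ 2 = 1 /\
        in_lattice k (padd p e) /\ in_lattice k (padd p (rot90 e)) /\
        in_lattice k (padd (padd p e) (rot90 e)) /\
        xh = padd p (pscal (1/2) (padd e (rot90 e)))
  | Triangular =>
      exists p q r : R * R,
        in_lattice k p /\ in_lattice k q /\ in_lattice k r /\
        sqdist p q = 1 /\ sqdist q r = 1 /\ sqdist r p = 1 /\
        xh = pscal (1/3) (padd (padd p q) r)
  end.

Definition Lmap (k : lattice_kind) (xh p : R * R) : R * R :=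
  padd (Qrot k (psub p xh)) xh.

Definition zadd (a b : Z * Z) : Z * Z := ((fst a + fst b)%Z, (snd a + snd b)%Z).
Definition zsub (a b : Z * Z) : Z * Z := ((fst a - fst b)%Z, (snd a - snd b)%Z).
Definition zeqb (a b : Z * Z) : bool := (Z.eqb (fst a) (fst b) && Z.eqb (snd a) (snd b))%bool.

(** Finite sums over the finite set R (given as a duplicate-free list). *)
Definition sumR (Rs : list (Z * Z)) (F : Z * Z -> R) : R :=
  fold_right Rplus 0 (map F Rs).

Definition Zspan_full (Rs : list (Z * Z)) : Prop :=
  forall z : Z * Z, exists c : Z * Z -> Z,
    z = fold_right zadd (0%Z, 0%Z)
          (map (fun r => ((c r * fst r)%Z, (c r * snd r)%Z)) Rs).

(** Sums over Lambda, indexed by Z^2, via square boxes [-N,N]^2. *)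
Definition zrange (N : nat) : list Z :=
  map (fun k => (Z.of_nat k - Z.of_nat N)%Z) (seq 0 (2 * N + 1)).
Definition box (N : nat) : list (Z * Z) := list_prod (zrange N) (zrange N).
Definition box_sum (a : Z * Z -> R) (N : nat) : R :=
  fold_right Rplus 0 (map a (box N)).

Definition abs_summable (a : Z * Z -> R) : Prop :=
  exists M : R, forall N : nat, box_sum (fun z => Rabs (a z)) N <= M.

(** "sum_{x in Lambda} a(x) = s" (for absolutely summable families this is
    the unconditional sum) *)
Definition has_sum (a : Z * Z -> R) (s : R) : Prop :=
  is_lim_seq (fun N => box_sum a N) s.

(** the value of the sum (meaningful when it converges) *)
Definition lsum (a : Z * Z -> R) : R := real (Lim_seq (fun N => box_sum a N)).

(** Functions on R^R: represented as functions on (Z*Z -> R) that depend only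
    on the coordinates indexed by Rs. *)
Definition upd (A : Z * Z -> R) (rho : Z * Z) (t : R) : Z * Z -> R :=
  fun z => if zeqb z rho then A z + t else A z.

Definition partial (rho : Z * Z) (f : (Z * Z -> R) -> R) : (Z * Z -> R) -> R :=
  fun A => Derive (fun t => f (upd A rho t)) 0.

Definition contR (Rs : list (Z * Z)) (f : (Z * Z -> R) -> R) : Prop :=
  forall A (eps : R), 0 < eps -> exists delta : R, 0 < delta /\
    forall B, (forall rho, In rho Rs -> Rabs (B rho - A rho) < delta) ->
      Rabs (f B - f A) < eps.

(** C^k(R^R) via continuous partial derivatives up to order k *)
Fixpoint Ck (Rs : list (Z * Z)) (k : nat) (f : (Z * Z -> R) -> R) : Prop :=
  match k with
  | O => contR Rs f
  | S k' => contR Rs f /\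
      (forall rho, In rho Rs -> forall A, ex_derive (fun t => f (upd A rho t)) 0) /\
      (forall rho, In rho Rs -> Ck Rs k' (partial rho f))
  end.

Definition hess (V : (Z * Z -> R) -> R) (rho sigma : Z * Z) : R :=
  partial rho (partial sigma V) (fun _ => 0).

Definition Dfd (rho : Z * Z) (u : Z * Z -> R) (x : Z * Z) : R :=
  u (zadd x rho) - u x.

Definition divR (Rs : list (Z * Z)) (g : Z * Z -> Z * Z -> R) (x : Z * Z) : R :=
  - sumR Rs (fun rho => g rho (zsub x rho) - g rho x).

Definition f_u (Rs : list (Z * Z)) (V : (Z * Z -> R) -> R) (u : Z * Z -> R)
  : Z * Z -> R :=
  fun x => - divR Rs (fun rho y => sumR Rs (fun sigma => hess V rho sigma * Dfd sigma u y)) x.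

Definition in_H1 (Rs : list (Z * Z)) (u : Z * Z -> R) : Prop :=
  forall rho, In rho Rs -> abs_summable (fun x => (Dfd rho u x) ^ 2).

Definition admissible_R (k : lattice_kind) (Rs : list (Z * Z)) : Prop :=
  NoDup Rs /\ ~ In (0%Z, 0%Z) Rs /\ Zspan_full Rs /\
  (forall rho, In rho Rs -> exists sigma, In sigma Rs /\ emb k sigma = Qrot k (emb k rho)) /\
  (forall sigma, In sigma Rs -> exists rho, In rho Rs /\ emb k sigma = Qrot k (emb k rho)).

Definition admissible_V (k : lattice_kind) (Rs : list (Z * Z))
  (V : (Z * Z -> R) -> R) : Prop :=
  (* V is a function on R^R *)
  (forall A B, (forall rho, In rho Rs -> A rho = B rho) -> V A = V B) /\
  Ck Rs 6 V /\
  (* V(A) = V((A_{Q rho})_rho) *)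
  (forall A B, (forall rho sigma, In rho Rs -> In sigma Rs ->
                 emb k sigma = Qrot k (emb k rho) -> B rho = A sigma) ->
               V A = V B) /\
  (exists p : R, 0 < p /\ forall rho, In rho Rs ->
     (forall A, V (upd A rho p) = V A) /\
     (forall q, 0 < q < p -> exists A, V (upd A rho q) <> V A)) /\
  (exists c0 : R, 0 < c0 /\ forall v : Z * Z -> R, in_H1 Rs v ->
     lsum (fun x => sumR Rs (fun rho => sumR Rs (fun sigma =>
             hess V rho sigma * Dfd rho v x * Dfd sigma v x)))
     >= c0 * lsum (fun x => sumR Rs (fun rho => (Dfd rho v x) ^ 2))).

(* Main.v *)
Require Import Defs.
From Stdlib Require Import Reals ZArith List.
From Coquelicot Require Import Coquelicot.
From Stdlib Require Import Lia Lra Permutation FunctionalExtensionality Classical.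
Open Scope R_scope.

Definition sumL (l : list (Z*Z)) (a : Z*Z -> R) : R := fold_right Rplus 0 (map a l).

Lemma zp_eq_dec : forall a b : Z*Z, {a = b} + {a <> b}.
Proof. decide equality; apply Z.eq_dec. Qed.

Lemma sumL_nil a : sumL nil a = 0. Proof. reflexivity. Qed.
Lemma sumL_cons x l a : sumL (x :: l) a = a x + sumL l a. Proof. reflexivity. Qed.

Lemma sumL_app l1 l2 a : sumL (l1 ++ l2) a = sumL l1 a + sumL l2 a.
Proof. induction l1; [rewrite sumL_nil; simpl; lra|]. simpl. rewrite !sumL_cons, IHl1. lra. Qed.

Lemma sumL_perm l1 l2 a : Permutation l1 l2 -> sumL l1 a = sumL l2 a.
Proof. induction 1; unfold sumL in *; simpl; try lra.
 all: try (rewrite IHPermutation; lra). all: try (rewrite IHPermutation1; auto). Qed.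

Lemma sumL_ext l a b : (forall x, In x l -> a x = b x) -> sumL l a = sumL l b.
Proof. induction l; intros H; simpl; auto. rewrite !sumL_cons, H, IHl; auto. intros; apply H; simpl; auto. left; auto. Qed.

Lemma sumL_plus l a b : sumL l (fun x => a x + b x) = sumL l a + sumL l b.
Proof. induction l; [unfold sumL; simpl; lra|]. rewrite !sumL_cons, IHl. lra. Qed.

Lemma sumL_minus l a b : sumL l (fun x => a x - b x) = sumL l a - sumL l b.
Proof. induction l; [unfold sumL; simpl; lra|]. rewrite !sumL_cons, IHl. lra. Qed.

Lemma sumL_scal l c a : sumL l (fun x => c * a x) = c * sumL l a.
Proof. induction l; [unfold sumL; simpl; lra|]. rewrite !sumL_cons, IHl. lra. Qed.

Lemma sumL_const l c : sumL l (fun _ => c) = INR (length l) * c.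
Proof. induction l; [unfold sumL; simpl; lra|]. rewrite !sumL_cons, IHl. simpl length. rewrite S_INR. lra. Qed.

Lemma sumL_le l a b : (forall x, In x l -> a x <= b x) -> sumL l a <= sumL l b.
Proof. induction l; intros H; [unfold sumL; simpl; lra|]. rewrite !sumL_cons.
 assert (a a0 <= b a0) by (apply H; left; auto). assert (sumL l a <= sumL l b) by (apply IHl; intros; apply H; right; auto). lra. Qed.

Lemma sumL_nonneg l a : (forall x, In x l -> 0 <= a x) -> 0 <= sumL l a.
Proof. intros H. replace 0 with (sumL l (fun _ => 0)). apply sumL_le; auto.
 rewrite sumL_const; lra. Qed.

Lemma sumL_abs l a : Rabs (sumL l a) <= sumL l (fun x => Rabs (a x)).
Proof. induction l; [unfold sumL; simpl; rewrite Rabs_R0; lra|]. rewrite !sumL_cons.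
 eapply Rle_trans; [apply Rabs_triang|]. lra. Qed.

Lemma sumL_map g l a : sumL (map g l) a = sumL l (fun x => a (g x)).
Proof. unfold sumL. rewrite map_map. reflexivity. Qed.

Lemma sumL_swap l m (F : Z*Z -> Z*Z -> R) :
  sumL l (fun x => sumL m (fun y => F x y)) = sumL m (fun y => sumL l (fun x => F x y)).
Proof. induction l. - simpl. rewrite sumL_nil. symmetry. replace 0 with (sumL m (fun _ => 0)).
 apply sumL_ext. intros; reflexivity. rewrite sumL_const; lra.
 - rewrite sumL_cons, IHl. rewrite <- sumL_plus. apply sumL_ext. intros. rewrite sumL_cons. reflexivity. Qed.

Lemma sumL_in_le l a x : NoDup l -> In x l -> (forall y, In y l -> 0 <= a y) -> a x <= sumL l a.
Proof. induction l; intros Hn Hi Ha; [destruct Hi|]. rewrite sumL_cons. inversion Hn; subst.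
 destruct Hi as [<-|Hi]. - assert (0 <= sumL l a) by (apply sumL_nonneg; intros; apply Ha; right; auto). lra.
 - assert (0 <= a a0) by (apply Ha; left; auto). assert (a x <= sumL l a) by (apply IHl; auto; intros; apply Ha; right; auto). lra. Qed.

Definition inb (l : list (Z*Z)) (x : Z*Z) : bool := if in_dec zp_eq_dec x l then true else false.
Definition outf (l : list (Z*Z)) (a : Z*Z -> R) (x : Z*Z) : R := if in_dec zp_eq_dec x l then 0 else a x.

Lemma sumL_split l1 l2 a : NoDup l1 -> NoDup l2 -> incl l1 l2 ->
  sumL l2 a = sumL l1 a + sumL l2 (outf l1 a).
Proof. intros N1 N2 Hi.
 set (F := filter (fun x => negb (inb l1 x)) l2).
 assert (P : Permutation l2 (l1 ++ F)).
 { apply NoDup_Permutation; auto. apply NoDup_app; auto. apply NoDup_filter; auto.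
   intros x H1 H2. unfold F in H2. apply filter_In in H2. destruct H2 as [_ H2]. unfold inb in H2.
   destruct (in_dec zp_eq_dec x l1); simpl in H2; congruence.
   intros x; split; intros H. apply in_or_app. destruct (in_dec zp_eq_dec x l1); [left; auto|right].
   unfold F. apply filter_In. split; auto. unfold inb. destruct (in_dec zp_eq_dec x l1); tauto.
   apply in_app_or in H. destruct H; auto. unfold F in H. apply filter_In in H; tauto. }
 rewrite (sumL_perm _ _ a P), (sumL_perm _ _ (outf l1 a) P), !sumL_app.
 assert (sumL l1 (outf l1 a) = 0).
 { replace 0 with (sumL l1 (fun _ => 0)) by (rewrite sumL_const; lra). apply sumL_ext. intros x Hx.
   unfold outf. destruct (in_dec zp_eq_dec x l1); tauto. }
 assert (sumL F (outf l1 a) = sumL F a).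
 { apply sumL_ext. intros x Hx. unfold F in Hx. apply filter_In in Hx. unfold outf, inb in *.
   destruct (in_dec zp_eq_dec x l1); simpl in Hx; [destruct Hx; discriminate|auto]. }
 lra. Qed.

Lemma outf_nonneg l a x : (forall y, 0 <= a y) -> 0 <= outf l a x.
Proof. intros; unfold outf; destruct in_dec; auto; lra. Qed.

Lemma sumL_incl_le l1 l2 a : NoDup l1 -> NoDup l2 -> incl l1 l2 -> (forall y, 0 <= a y) ->
  sumL l1 a <= sumL l2 a.
Proof. intros. rewrite (sumL_split l1 l2); auto. assert (0 <= sumL l2 (outf l1 a)).
 apply sumL_nonneg; intros; apply outf_nonneg; auto. lra. Qed.

Lemma sumL_sandwich l0 l l2 a : NoDup l0 -> NoDup l -> NoDup l2 -> incl l0 l -> incl l l2 ->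
  Rabs (sumL l a - sumL l0 a) <= sumL l2 (fun x => Rabs (a x)) - sumL l0 (fun x => Rabs (a x)).
Proof. intros. rewrite (sumL_split l0 l a); auto. rewrite (sumL_split l0 l2 (fun x => Rabs (a x))); auto.
 2:{ intros x Hx; auto. }
 replace (sumL l0 a + sumL l (outf l0 a) - sumL l0 a) with (sumL l (outf l0 a)) by lra.
 eapply Rle_trans. apply sumL_abs.
 replace (sumL l (fun x => Rabs (outf l0 a x))) with (sumL l (outf l0 (fun x => Rabs (a x)))).
 2:{ apply sumL_ext; intros; unfold outf; destruct in_dec; auto. rewrite Rabs_R0; auto. }
 assert (sumL l (outf l0 (fun x => Rabs (a x))) <= sumL l2 (outf l0 (fun x => Rabs (a x)))).
 apply sumL_incl_le; auto. intros; apply outf_nonneg; intros; apply Rabs_pos. lra. Qed.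

Lemma in_zrange N z : In z (zrange N) <-> (- Z.of_nat N <= z <= Z.of_nat N)%Z.
Proof. unfold zrange. rewrite in_map_iff. split.
 - intros [k [<- Hk]]. apply in_seq in Hk. lia.
 - intros H. exists (Z.to_nat (z + Z.of_nat N)). split. lia. apply in_seq. lia. Qed.

Lemma NoDup_zrange N : NoDup (zrange N).
Proof. unfold zrange. apply FinFun.Injective_map_NoDup. intros x y H; lia. apply seq_NoDup. Qed.

Lemma NoDup_prod (l l' : list Z) : NoDup l -> NoDup l' -> NoDup (list_prod l l').
Proof. induction l; intros H H'; simpl. constructor. inversion H; subst.
 apply NoDup_app. apply FinFun.Injective_map_NoDup; auto. intros x y E; inversion E; auto.
 apply IHl; auto. intros [x y] I1 I2. apply in_map_iff in I1. destruct I1 as [z [E _]]. inversion E; subst.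
 apply in_prod_iff in I2. tauto. Qed.

Lemma in_box N z : In z (box N) <-> (- Z.of_nat N <= fst z <= Z.of_nat N /\ - Z.of_nat N <= snd z <= Z.of_nat N)%Z.
Proof. destruct z as [x y]. unfold box. rewrite in_prod_iff, !in_zrange. simpl. tauto. Qed.

Lemma NoDup_box N : NoDup (box N).
Proof. apply NoDup_prod; apply NoDup_zrange. Qed.

Lemma length_box N : length (box N) = ((2*N+1)*(2*N+1))%nat.
Proof. unfold box, zrange. rewrite length_prod, length_map, length_seq. reflexivity. Qed.

Lemma box_incl N M : (N <= M)%nat -> incl (box N) (box M).
Proof. intros H z Hz. apply in_box in Hz. apply in_box. lia. Qed.

Lemma box_sum_eq a N : box_sum a N = sumL (box N) a.
Proof. reflexivity. Qed.

Lemma box_sum_mono a N M : (forall y, 0 <= a y) -> (N <= M)%nat -> box_sum a N <= box_sum a M.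
Proof. intros. apply sumL_incl_le; auto using NoDup_box, box_incl. Qed.

Lemma mono_sup (P : nat -> R) K : (forall n m, (n <= m)%nat -> P n <= P m) -> (forall n, P n <= K) ->
  exists T, (forall n, P n <= T) /\ (forall eta, 0 < eta -> exists n, T - eta < P n).
Proof. intros Hm HK. destruct (completeness (fun x => exists n, x = P n)) as [T [HT1 HT2]].
 exists K. intros x [n ->]; auto. exists (P 0%nat); eauto.
 exists T. split. intros n; apply HT1; eauto.
 intros eta He. apply NNPP. intros Hn. assert (T <= T - eta). apply HT2. intros x [n ->].
 destruct (Rle_lt_dec (P n) (T - eta)); auto. exfalso; apply Hn; eauto. lra. Qed.

Definition absP (a : Z*Z -> R) N := box_sum (fun z => Rabs (a z)) N.

Lemma absP_mono a n m : (n <= m)%nat -> absP a n <= absP a m.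
Proof. intros; apply box_sum_mono; auto. intros; apply Rabs_pos. Qed.

Lemma abs_tail a : abs_summable a -> exists T, (forall N, absP a N <= T) /\
   (forall eps, 0 < eps -> exists N0, T - eps < absP a N0).
Proof. intros [K HK]. apply (mono_sup _ K); auto. apply absP_mono. Qed.

Lemma box_diff a n m : (m <= n)%nat -> Rabs (box_sum a n - box_sum a m) <= absP a n - absP a m.
Proof. intros. apply sumL_sandwich; auto using NoDup_box, box_incl, incl_refl. Qed.

Lemma exists_sum a : abs_summable a -> exists s, has_sum a s.
Proof. intros Ha. destruct (abs_tail a Ha) as [T [H1 H2]].
 assert (ex_finite_lim_seq (fun N => box_sum a N)) as [s Hs]. 2:{ exists s; exact Hs. }
 apply ex_lim_seq_cauchy_corr. intros eps. destruct (H2 (eps/2)) as [N0 HN0]. destruct eps; simpl; lra.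
 exists N0. intros n m Hn Hm.
 assert (A1 := box_diff a n N0 Hn). assert (A2 := box_diff a m N0 Hm).
 assert (absP a n <= T) by auto. assert (absP a m <= T) by auto.
 replace (box_sum a n - box_sum a m) with ((box_sum a n - box_sum a N0) - (box_sum a m - box_sum a N0)) by ring.
 eapply Rle_lt_trans. apply Rabs_triang. rewrite Rabs_Ropp. lra. Qed.

Lemma exhaust a s (L : nat -> list (Z*Z)) : abs_summable a -> has_sum a s ->
  (forall N, NoDup (L N)) -> (forall N, exists M, incl (L N) (box M)) ->
  (forall N0, exists N1, forall N, (N1 <= N)%nat -> incl (box N0) (L N)) ->
  is_lim_seq (fun N => sumL (L N) a) s.
Proof. intros Ha Hs HN HB HC. destruct (abs_tail a Ha) as [T [H1 H2]].
 apply is_lim_seq_spec. apply is_lim_seq_spec in Hs. intros eps.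
 destruct (H2 (eps/2)) as [N0 HN0]. destruct eps; simpl; lra.
 destruct (Hs (mkposreal (eps/2) ltac:(destruct eps; simpl; lra))) as [N2 HN2].
 set (N3 := Nat.max N0 N2). destruct (HC N3) as [N1 HN1]. exists N1. intros N HNN.
 destruct (HB N) as [M HM].
 assert (I := HN1 N HNN).
 assert (Hsw : Rabs (sumL (L N) a - sumL (box N3) a) <= absP a M - absP a N3).
 { apply sumL_sandwich; auto using NoDup_box. }
 assert (absP a N0 <= absP a N3) by (apply absP_mono; lia). assert (absP a M <= T) by auto.
 assert (Rabs (box_sum a N3 - s) < eps/2) by (apply (HN2 N3); lia).
 unfold box_sum in *. replace (sumL (L N) a - s) with ((sumL (L N) a - sumL (box N3) a) + (sumL (box N3) a - s)) by ring.
 eapply Rle_lt_trans. apply Rabs_triang. unfold sumL in *. lra. Qed.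

Lemma sumL_point l z0 c : NoDup l -> 0 <= c -> sumL l (fun x => if zp_eq_dec x z0 then c else 0) <= c.
Proof. intros Hn Hc. destruct (in_dec zp_eq_dec z0 l) as [Hi|Hi].
 - rewrite (sumL_split (z0 :: nil) l); auto. 2: repeat constructor; auto. 2: intros x [<-|[]]; auto.
   rewrite sumL_cons, sumL_nil. destruct zp_eq_dec; [|congruence].
   replace (sumL l (outf (z0 :: nil) (fun x => if zp_eq_dec x z0 then c else 0))) with (sumL l (fun _ => 0)).
   rewrite sumL_const; lra. apply sumL_ext. intros x _. unfold outf. destruct in_dec; auto.
   destruct zp_eq_dec; auto. subst; exfalso; apply n; left; auto.
 - replace (sumL l (fun x => if zp_eq_dec x z0 then c else 0)) with (sumL l (fun _ => 0)).
   rewrite sumL_const; lra. apply sumL_ext. intros x Hx. destruct zp_eq_dec; auto. subst; tauto. Qed.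

Lemma abs_dom a1 a2 b z0 : abs_summable a1 -> abs_summable a2 ->
  (forall x, x <> z0 -> Rabs (b x) <= Rabs (a1 x) + Rabs (a2 x)) -> abs_summable b.
Proof. intros [M1 H1] [M2 H2] H. exists (M1 + M2 + Rabs (b z0)). intros N.
 change (box_sum ?f ?n) with (sumL (box n) f) in *. eapply Rle_trans.
 apply (sumL_le _ _ (fun x => (Rabs (a1 x) + Rabs (a2 x)) + (if zp_eq_dec x z0 then Rabs (b z0) else 0))).
 intros x _. destruct zp_eq_dec. subst. assert (0 <= Rabs (a1 z0)) by apply Rabs_pos.
 assert (0 <= Rabs (a2 z0)) by apply Rabs_pos. lra. specialize (H x n); lra.
 rewrite sumL_plus, sumL_plus. specialize (H1 N). specialize (H2 N).
 assert (sumL (box N) (fun x => if zp_eq_dec x z0 then Rabs (b z0) else 0) <= Rabs (b z0)).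
 apply sumL_point. apply NoDup_box. apply Rabs_pos. unfold sumL in *; lra. Qed.

Lemma abs_scalL c a : abs_summable a -> abs_summable (fun x => c * a x).
Proof. intros [M H]. exists (Rabs c * M). intros N. change (box_sum ?f ?n) with (sumL (box n) f) in *.
 replace (sumL (box N) (fun z => Rabs (c * a z))) with (Rabs c * sumL (box N) (fun z => Rabs (a z))).
 apply Rmult_le_compat_l. apply Rabs_pos. apply H.
 rewrite <- sumL_scal. apply sumL_ext. intros; rewrite Rabs_mult; auto. Qed.

Lemma abs_plusL a b : abs_summable a -> abs_summable b -> abs_summable (fun x => a x + b x).
Proof. intros Ha Hb. apply (abs_dom a b _ (0%Z,0%Z)); auto. intros; apply Rabs_triang. Qed.

Lemma abs_extL a b : (forall x, a x = b x) -> abs_summable a -> abs_summable b.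
Proof. intros H. replace b with a; auto. apply functional_extensionality; auto. Qed.

Lemma abs_zero0 : abs_summable (fun _ => 0).
Proof. exists 0. intros N. change (box_sum ?f ?n) with (sumL (box n) f). replace (sumL (box N) (fun _ => Rabs 0)) with (sumL (box N) (fun _ => 0)).
 rewrite sumL_const; lra. apply sumL_ext; intros; rewrite Rabs_R0; auto. Qed.

Lemma abs_sumR (Rs : list (Z*Z)) (h : Z*Z -> Z*Z -> R) : (forall s, In s Rs -> abs_summable (h s)) ->
  abs_summable (fun x => sumR Rs (fun s => h s x)).
Proof. induction Rs; intros H. simpl. apply abs_zero0. simpl. apply abs_plusL. apply H; left; auto.
 apply IHRs. intros; apply H; right; auto. Qed.

Lemma has_sum_ext a b s : (forall x, a x = b x) -> has_sum a s -> has_sum b s.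
Proof. intros H. replace b with a; auto. apply functional_extensionality; auto. Qed.

Lemma has_sum_plus a b s t : has_sum a s -> has_sum b t -> has_sum (fun x => a x + b x) (s + t).
Proof. intros Ha Hb. unfold has_sum, box_sum in *. eapply is_lim_seq_ext.
 2: apply (is_lim_seq_plus' _ _ _ _ Ha Hb). intros n. simpl. fold (sumL (box n) a). fold (sumL (box n) b).
 fold (sumL (box n) (fun x => a x + b x)). rewrite sumL_plus. auto. Qed.

Lemma has_sum_scal c a s : has_sum a s -> has_sum (fun x => c * a x) (c * s).
Proof. intros Ha. unfold has_sum, box_sum in *. eapply is_lim_seq_ext.
 2: apply (is_lim_seq_scal_l _ c _ Ha). intros n. simpl. fold (sumL (box n) a).
 fold (sumL (box n) (fun x => c * a x)). rewrite sumL_scal. auto. Qed.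

Lemma has_sum_unique a s t : has_sum a s -> has_sum a t -> s = t.
Proof. intros H1 H2. apply is_lim_seq_unique in H1. apply is_lim_seq_unique in H2. rewrite H1 in H2.
 inversion H2; auto. Qed.

Definition good_map (l : Z*Z -> Z*Z) : Prop :=
  (forall x y, l x = l y -> x = y) /\
  (exists c D, forall N z, In z (box N) -> In (l z) (box (c*N+D))) /\
  (exists li, (forall z, l (li z) = z) /\ exists c D, forall N z, In z (box N) -> In (li z) (box (c*N+D))).

Lemma abs_compL a l : good_map l -> abs_summable a -> abs_summable (fun x => a (l x)).
Proof. intros [Hi [[c [D Hb]] _]] [M HM]. exists M. intros N. change (box_sum ?f ?n) with (sumL (box n) f).
 fold (sumL (box N) (fun z => Rabs (a (l z)))). rewrite <- (sumL_map l (box N) (fun z => Rabs (a z))).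
 eapply Rle_trans. apply (sumL_incl_le _ (box (c*N+D))). apply FinFun.Injective_map_NoDup; auto. apply NoDup_box.
 apply NoDup_box. intros z Hz. apply in_map_iff in Hz. destruct Hz as [x [<- Hx]]. auto.
 intros; apply Rabs_pos. apply HM. Qed.

Lemma has_sum_comp a l s : good_map l -> abs_summable a -> has_sum a s -> has_sum (fun x => a (l x)) s.
Proof. intros Hg Ha Hs. destruct Hg as [Hi [[c [D Hb]] [li [Hli [c' [D' Hb']]]]]].
 unfold has_sum. eapply is_lim_seq_ext. 2: apply (exhaust a s (fun N => map l (box N))); auto.
 intros n. simpl. change (box_sum ?f ?n) with (sumL (box n) f). rewrite sumL_map. auto.
 intros; apply FinFun.Injective_map_NoDup; auto. apply NoDup_box.
 intros N. exists (c*N+D)%nat. intros z Hz. apply in_map_iff in Hz. destruct Hz as [x [<- Hx]]. auto.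
 intros N0. exists (c'*N0+D')%nat. intros N HN z Hz. apply in_map_iff. exists (li z). split; auto.
 eapply box_incl. apply HN. auto. Qed.

Lemma telescope (Q : nat -> R) c M : (forall j, (j < M)%nat -> Q (S j) - Q j >= c) ->
  forall J, (J <= M)%nat -> Q J - Q 0%nat >= INR J * c.
Proof. intros H J. induction J; intros HJ. simpl; lra. rewrite S_INR.
 assert (Q (S J) - Q J >= c) by (apply H; lia). assert (Q J - Q 0%nat >= INR J * c) by (apply IHJ; lia). lra. Qed.

Lemma small_e (P : nat -> R) K R : (forall n m, (n <= m)%nat -> P n <= P m) -> (forall n, P n <= K) -> (1 <= R)%nat ->
  forall delta, 0 < delta -> forall N1, exists N, (N1 <= N)%nat /\ (R <= N)%nat /\ (1 <= N)%nat /\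
    INR N * (P (N + R)%nat - P (N - R)%nat) < delta.
Proof. intros Hm HK HR delta Hd N1. apply NNPP. intros Hn.
 assert (H : forall N, (N1 <= N)%nat -> (R <= N)%nat -> (1 <= N)%nat -> INR N * (P (N + R)%nat - P (N - R)%nat) >= delta).
 { intros N a b c. destruct (Rlt_or_le (INR N * (P (N + R)%nat - P (N - R)%nat)) delta); [|lra].
   exfalso; apply Hn; exists N; auto. }
 destruct (mono_sup P K Hm HK) as [T [HT1 HT2]].
 assert (Hr : 1 <= INR R) by (apply (le_INR 1); auto).
 destruct (HT2 (delta / (3 * INR R))) as [n0 Hn0]. apply Rdiv_lt_0_compat; lra.
 set (M := (N1 + R + n0 + 1)%nat).
 set (Q := fun j => P (M - R + 2 * R * j)%nat).
 assert (HM : 1 <= INR M) by (apply (le_INR 1); unfold M; lia).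
 assert (Hq : forall j, (j < M)%nat -> Q (S j) - Q j >= delta / (3 * INR R * INR M)).
 { intros j Hj. set (Nj := (M + 2 * R * j)%nat).
   assert (E1 : Q (S j) = P (Nj + R)%nat) by (unfold Q, Nj; f_equal; unfold M in *; lia).
   assert (E2 : Q j = P (Nj - R)%nat) by (unfold Q, Nj; f_equal; unfold M in *; lia).
   rewrite E1, E2. assert (Hj2 := H Nj ltac:(unfold Nj, M; lia) ltac:(unfold Nj, M; lia) ltac:(unfold Nj, M; lia)).
   assert (HN : INR Nj <= 3 * INR R * INR M).
   { assert (INR Nj <= INR (3 * R * M)) by (apply le_INR; unfold Nj; nia). rewrite !mult_INR in H0. simpl in H0. lra. }
   assert (HN1 : 1 <= INR Nj) by (apply (le_INR 1); unfold Nj, M; lia).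
   set (e := P (Nj + R)%nat - P (Nj - R)%nat) in *.
   assert (e >= delta / INR Nj). { apply Rle_ge. apply Rmult_le_reg_l with (INR Nj). lra. field_simplify; lra. }
   assert (delta / (3 * INR R * INR M) <= delta / INR Nj). { apply Rmult_le_compat_l. lra. apply Rinv_le_contravar; lra. }
   lra. }
 assert (Ht := telescope Q _ M Hq M (le_n M)).
 replace (INR M * (delta / (3 * INR R * INR M))) with (delta / (3 * INR R)) in Ht by (field; lra).
 assert (Q M <= T) by apply HT1. assert (P n0 <= Q 0%nat) by (apply Hm; unfold M; lia). lra. Qed.

Lemma length_box_R N : INR (length (box N)) = (2 * INR N + 1) * (2 * INR N + 1).
Proof. rewrite length_box, mult_INR, plus_INR, mult_INR. simpl. lra. Qed.

Lemma boundary_small (G : Z*Z -> R) R : (forall x, 0 <= G x) -> abs_summable (fun x => G x ^ 2) -> (1 <= R)%nat ->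
  forall eps, 0 < eps -> forall N1, exists N, (N1 <= N)%nat /\ (R <= N)%nat /\
    box_sum G (N + R) - box_sum G (N - R) < eps.
Proof. intros HG [K HK] HR eps He N1.
 set (P := box_sum (fun x => G x ^ 2)).
 assert (Hm : forall n m, (n <= m)%nat -> P n <= P m). { intros; apply box_sum_mono; auto. intros; apply pow2_ge_0. }
 assert (HK' : forall n, P n <= K). { intros n. eapply Rle_trans; [|apply (HK n)]. apply sumL_le. intros; apply Req_le.
   rewrite Rabs_right; auto. apply Rle_ge, pow2_ge_0. }
 assert (Hr : 1 <= INR R) by (apply (le_INR 1); auto).
 destruct (small_e P K R Hm HK' HR (eps^2 / (24 * INR R)) ltac:(apply Rdiv_lt_0_compat; nra) N1) as [N [H1 [H2 [H3 H4]]]].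
 exists N; split; auto; split; auto.
 assert (HN : 1 <= INR N) by (apply (le_INR 1); auto).
 set (lo := box (N - R)). set (hi := box (N + R)).
 assert (Hinc : incl lo hi) by (apply box_incl; lia).
 change (box_sum ?f ?n) with (sumL (box n) f). fold lo hi.
 rewrite (sumL_split lo hi G); try apply NoDup_box; auto.
 set (t := eps / (24 * INR R * INR N)).
 assert (Ht : 0 < t) by (unfold t; apply Rdiv_lt_0_compat; nra).
 assert (Hpt : forall x, In x hi -> outf lo G x <= / (2 * t) * outf lo (fun y => G y ^ 2) x + t / 2 * outf lo (fun _ => 1) x).
 { intros x _. unfold outf. destruct in_dec. lra. assert (0 <= (G x - t)^2) by apply pow2_ge_0.
   apply Rmult_le_reg_l with (2 * t). lra. field_simplify; try lra; try nra. }
 assert (Hs := sumL_le _ _ _ Hpt). rewrite sumL_plus, !sumL_scal in Hs.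
 assert (Ee : sumL hi (outf lo (fun y => G y ^ 2)) = P (N + R)%nat - P (N - R)%nat).
 { unfold P. change (box_sum ?f ?n) with (sumL (box n) f). fold lo hi. rewrite (sumL_split lo hi (fun y => G y ^ 2)); try apply NoDup_box; auto. ring. }
 assert (EA : sumL hi (outf lo (fun _ => 1)) = INR (length hi) - INR (length lo)).
 { assert (X := sumL_split lo hi (fun _ => 1) ltac:(apply NoDup_box) ltac:(apply NoDup_box) Hinc).
   rewrite !sumL_const in X. lra. }
 rewrite Ee, EA in Hs. unfold hi, lo in Hs. rewrite !length_box_R in Hs. rewrite plus_INR, minus_INR in Hs by lia.
 set (e := P (N + R)%nat - P (N - R)%nat) in *.
 assert (He0 : 0 <= e) by (unfold e; assert (P (N-R)%nat <= P (N+R)%nat) by (apply Hm; lia); lra).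
 assert (A1 : (2 * (INR N + INR R) + 1) * (2 * (INR N + INR R) + 1) - (2 * (INR N - INR R) + 1) * (2 * (INR N - INR R) + 1) <= 24 * INR R * INR N) by nra.
 assert (A2 : t / 2 * ((2 * (INR N + INR R) + 1) * (2 * (INR N + INR R) + 1) - (2 * (INR N - INR R) + 1) * (2 * (INR N - INR R) + 1)) <= eps / 2).
 { eapply Rle_trans. apply Rmult_le_compat_l. lra. apply A1. unfold t. field_simplify; nra. }
 assert (A3 : / (2 * t) * e < eps / 2).
 { unfold t. replace (/ (2 * (eps / (24 * INR R * INR N))) * e) with (12 * INR R * (INR N * e) / eps) by (field; nra).
   apply Rmult_lt_reg_r with eps; auto. field_simplify; try lra.
   assert (INR N * e * (24 * INR R) < eps ^ 2). { apply Rmult_lt_reg_r with (/ (24 * INR R)). apply Rinv_0_lt_compat; nra.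
     field_simplify; try nra. } nra. }
 unfold hi, lo; lra. Qed.

Lemma Rs_bound (Rs : list (Z*Z)) : exists R, (1 <= R)%nat /\
  forall r, In r Rs -> (Z.abs (fst r) <= Z.of_nat R /\ Z.abs (snd r) <= Z.of_nat R)%Z.
Proof. induction Rs as [|a Rs IH]. exists 1%nat; split; auto; intros r [].
 destruct IH as [R [H1 H2]]. exists (R + Z.to_nat (Z.abs (fst a) + Z.abs (snd a)))%nat. split. lia.
 intros r [<-|Hr]. lia. specialize (H2 r Hr). lia. Qed.

Lemma sumR_sumL Rs F : sumR Rs F = sumL Rs F. Proof. reflexivity. Qed.

Lemma div_bound Rs g f R N : (forall x, f x = sumR Rs (fun r => g r (zsub x r) - g r x)) ->
  (forall r, In r Rs -> (Z.abs (fst r) <= Z.of_nat R /\ Z.abs (snd r) <= Z.of_nat R)%Z) -> (R <= N)%nat ->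
  Rabs (box_sum f N) <= 2 * (box_sum (fun x => sumR Rs (fun r => Rabs (g r x))) (N + R) -
                              box_sum (fun x => sumR Rs (fun r => Rabs (g r x))) (N - R)).
Proof. intros Hf HR HN. change (box_sum ?f ?n) with (sumL (box n) f).
 replace f with (fun x => sumL Rs (fun r => g r (zsub x r) - g r x)) by (apply functional_extensionality; intros; rewrite Hf; auto).
 rewrite sumL_swap. change (fun x => sumR Rs (fun r => Rabs (g r x))) with (fun x => sumL Rs (fun r => Rabs (g r x))). rewrite !(sumL_swap _ Rs).
 rewrite <- sumL_minus, <- sumL_scal.
 eapply Rle_trans. apply sumL_abs. apply sumL_le. intros r Hr. rewrite sumL_minus.
 set (lo := box (N - R)). set (hi := box (N + R)).
 assert (Hlo : incl lo (box N)) by (apply box_incl; lia). assert (Hhi : incl (box N) hi) by (apply box_incl; lia).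
 assert (Ninj : forall x y, zsub x r = zsub y r -> x = y).
 { intros [x1 x2] [y1 y2] E. unfold zsub in E; simpl in E. inversion E. f_equal; lia. }
 assert (ND : NoDup (map (fun x => zsub x r) (box N))) by (apply FinFun.Injective_map_NoDup; auto; apply NoDup_box).
 assert (I1 : incl lo (map (fun x => zsub x r) (box N))).
 { intros z Hz. apply in_map_iff. exists (zadd z r). split. destruct z; unfold zadd, zsub; simpl; f_equal; lia.
   apply in_box. apply in_box in Hz. specialize (HR r Hr). destruct z; unfold zadd; simpl in *. lia. }
 assert (I2 : incl (map (fun x => zsub x r) (box N)) hi).
 { intros z Hz. apply in_map_iff in Hz. destruct Hz as [x [<- Hx]]. apply in_box. apply in_box in Hx. specialize (HR r Hr).
   destruct x; unfold zsub; simpl in *. lia. }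
 assert (S1 := sumL_sandwich lo _ hi (g r) ltac:(apply NoDup_box) ND ltac:(apply NoDup_box) I1 I2).
 assert (S2 := sumL_sandwich lo (box N) hi (g r) ltac:(apply NoDup_box) ltac:(apply NoDup_box) ltac:(apply NoDup_box) Hlo Hhi).
 rewrite sumL_map in S1.
 replace (sumL (box N) (fun x => g r (zsub x r)) - sumL (box N) (g r)) with
   ((sumL (box N) (fun x => g r (zsub x r)) - sumL lo (g r)) - (sumL (box N) (g r) - sumL lo (g r))) by ring.
 eapply Rle_trans. apply Rabs_triang. rewrite Rabs_Ropp. unfold lo, hi in *. lra. Qed.

Lemma div_sum_zero Rs g f : (forall x, f x = sumR Rs (fun r => g r (zsub x r) - g r x)) ->
  abs_summable (fun x => sumR Rs (fun r => Rabs (g r x)) ^ 2) -> abs_summable f -> has_sum f 0.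
Proof. intros Hf HG Ha. destruct (exists_sum f Ha) as [F HF]. replace 0 with F; auto.
 destruct (Rs_bound Rs) as [R [HR1 HR2]].
 apply NNPP. intros HF0. set (eps := Rabs F / 3).
 assert (He : 0 < eps) by (unfold eps; assert (0 < Rabs F) by (apply Rabs_pos_lt; auto); lra).
 assert (HF' := HF). apply is_lim_seq_spec in HF'. destruct (HF' (mkposreal eps He)) as [N0 HN0]. simpl in HN0.
 destruct (boundary_small (fun x => sumR Rs (fun r => Rabs (g r x))) R) with (eps := eps / 2) (N1 := N0) as [N [H1 [H2 H3]]]; auto.
 intros x. apply sumL_nonneg. intros; apply Rabs_pos. lra.
 assert (Hb := div_bound Rs g f R N Hf HR2 H2). specialize (HN0 N H1).
 assert (Rabs F <= Rabs (box_sum f N - F) + Rabs (box_sum f N)).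
 { replace F with (box_sum f N - (box_sum f N - F)) at 1 by ring. eapply Rle_trans. apply Rabs_triang.
   rewrite Rabs_Ropp. lra. }
 unfold eps in *. lra. Qed.

Definition qz (k : lattice_kind) (z : Z*Z) : Z*Z :=
  match k with Square => ((- snd z)%Z, fst z) | Triangular => ((- fst z - snd z)%Z, fst z) end.
Definition qi (k : lattice_kind) (z : Z*Z) : Z*Z :=
  match k with Square => (snd z, (- fst z)%Z) | Triangular => (snd z, (- fst z - snd z)%Z) end.

Lemma qz_qi k z : qz k (qi k z) = z.
Proof. destruct k, z; simpl; f_equal; lia. Qed.
Lemma qz_inj k x y : qz k x = qz k y -> x = y.
Proof. destruct k, x, y; simpl; intros E; inversion E; f_equal; lia. Qed.
Lemma qz_add k a b : qz k (zadd a b) = zadd (qz k a) (qz k b).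
Proof. destruct k, a, b; unfold zadd; simpl; f_equal; lia. Qed.
Lemma qz_sub k a b : qz k (zsub a b) = zsub (qz k a) (qz k b).
Proof. destruct k, a, b; unfold zsub; simpl; f_equal; lia. Qed.

Lemma s3s3 : sqrt 3 * sqrt 3 = 3. Proof. apply sqrt_sqrt; lra. Qed.
Lemma s3pos : 0 < sqrt 3. Proof. apply sqrt_lt_R0; lra. Qed.

Definition q11 k := match k with Square => 0 | Triangular => - (1/2) end.
Definition q12 k := match k with Square => -1 | Triangular => - (sqrt 3 / 2) end.
Definition q21 k := match k with Square => 1 | Triangular => sqrt 3 / 2 end.
Definition q22 k := match k with Square => 0 | Triangular => - (1/2) end.

Lemma Qrot_fst k p : fst (Qrot k p) = q11 k * fst p + q12 k * snd p.
Proof. destruct k; simpl; ring. Qed.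
Lemma Qrot_snd k p : snd (Qrot k p) = q21 k * fst p + q22 k * snd p.
Proof. destruct k; simpl; ring. Qed.

Lemma emb_q k z : emb k (qz k z) = Qrot k (emb k z).
Proof. destruct k, z as [m n]; simpl; rewrite ?minus_IZR, ?opp_IZR; f_equal; try field.
 replace ((sqrt 3 / 2) * (IZR n * sqrt 3 / 2)) with (IZR n * (sqrt 3 * sqrt 3) / 4) by field.
   rewrite s3s3. field. Qed.

Lemma emb_add k a b : emb k (zadd a b) = padd (emb k a) (emb k b).
Proof. destruct k, a, b; unfold zadd, padd; simpl; rewrite !plus_IZR; f_equal; field. Qed.

Lemma emb_inj k x y : emb k x = emb k y -> x = y.
Proof. destruct k, x as [a b], y as [c d]; simpl; intros E; inversion E.
 - apply eq_IZR in H0; apply eq_IZR in H1; subst; auto.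
 - assert (IZR b = IZR d). { apply Rmult_eq_reg_r with (sqrt 3 / 2). lra. assert (H3:=s3pos). lra. }
   assert (IZR a = IZR c) by lra. apply eq_IZR in H; apply eq_IZR in H2; subst; auto. Qed.

Lemma IZR_abs_ge1 z : z <> 0%Z -> 1 <= Rabs (IZR z).
Proof. intros H. rewrite <- abs_IZR. apply IZR_le. lia. Qed.

Lemma Qrot_sub k p h : Qrot k (psub p h) = psub (Qrot k p) (Qrot k h).
Proof. destruct k; unfold psub; simpl; f_equal; ring. Qed.

Lemma lmap_emb k xh d x : emb k d = psub xh (Qrot k xh) ->
  Lmap k xh (emb k x) = emb k (zadd (qz k x) d).
Proof. intros H. rewrite emb_add, emb_q, H. unfold Lmap. rewrite Qrot_sub. unfold padd, psub; simpl. f_equal; ring. Qed.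

Lemma norm_units (a1 a2 : Z) : (a1*a1 + a1*a2 + a2*a2 = 1)%Z -> (-1 <= a1 <= 1 /\ -1 <= a2 <= 1)%Z.
Proof. intros H. split; nia. Qed.

Lemma tri_mod3 a1 a2 b1 b2 : (a1*a1 + a1*a2 + a2*a2 = 1)%Z -> (b1*b1 + b1*b2 + b2*b2 = 1)%Z ->
  ((a1-b1)*(a1-b1) + (a1-b1)*(a2-b2) + (a2-b2)*(a2-b2) = 1)%Z -> exists t, (a1 + b1 - a2 - b2 = 3 * t)%Z.
Proof. intros Ha Hb Hc. destruct (norm_units _ _ Ha) as [A1 A2]. destruct (norm_units _ _ Hb) as [B1 B2].
 assert (a1 = -1 \/ a1 = 0 \/ a1 = 1)%Z as Ea1 by lia. assert (a2 = -1 \/ a2 = 0 \/ a2 = 1)%Z as Ea2 by lia.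
 assert (b1 = -1 \/ b1 = 0 \/ b1 = 1)%Z as Eb1 by lia. assert (b2 = -1 \/ b2 = 0 \/ b2 = 1)%Z as Eb2 by lia.
 exists ((a1 + b1 - a2 - b2) / 3)%Z.
 destruct Ea1 as [->|[->| ->]]; destruct Ea2 as [->|[->| ->]]; destruct Eb1 as [->|[->| ->]]; destruct Eb2 as [->|[->| ->]];
  simpl in *; try discriminate; reflexivity. Qed.

Lemma sqdist_tri z w : sqdist (emb Triangular z) (emb Triangular w) =
  IZR ((fst z - fst w)*(fst z - fst w) + (fst z - fst w)*(snd z - snd w) + (snd z - snd w)*(snd z - snd w)).
Proof. destruct z as [a b], w as [c d]. unfold sqdist, emb; cbn [fst snd]. rewrite !plus_IZR, !mult_IZR, !minus_IZR.
 replace ((IZR b * sqrt 3 / 2 - IZR d * sqrt 3 / 2) ^ 2) with ((IZR b - IZR d)^2 * (sqrt 3 * sqrt 3) / 4) by field.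
 rewrite s3s3. field. Qed.

Lemma centre_d k xh : is_centre k xh -> exists d, emb k d = psub xh (Qrot k xh).
Proof. destruct k; simpl.
 - intros [p [e [[z0 Hp] [_ [[z1 H1] [_ [_ Hx]]]]]]].
   destruct z0 as [a b], z1 as [c d0], p as [p1 p2], e as [e1 e2]. simpl in *.
   inversion Hp; subst. unfold padd in H1; simpl in H1. inversion H1.
   exists ((b + c)%Z, (d0 - a)%Z). unfold psub, padd, pscal, rot90; simpl. rewrite plus_IZR, minus_IZR.
   f_equal; lra.
 - intros [p [q [r [[zp Hp] [[zq Hq] [[zr Hr] [H1 [H2 [H3 Hx]]]]]]]]].
   subst p q r. rewrite !sqdist_tri in *. apply eq_IZR in H1. apply eq_IZR in H2. apply eq_IZR in H3.
   destruct (tri_mod3 (fst zq - fst zp) (snd zq - snd zp) (fst zr - fst zp) (snd zr - snd zp)) as [t Ht].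
   nia. nia. nia.
   set (s1 := (fst zp + fst zq + fst zr)%Z). set (s2 := (snd zp + snd zq + snd zr)%Z).
   assert (Hs : (s1 - s2 = 3 * (t + fst zp - snd zp))%Z) by (unfold s1, s2; lia).
   exists ((s1 - (t + fst zp - snd zp))%Z, (- (t + fst zp - snd zp))%Z).
   subst xh. destruct zp as [a b], zq as [c d], zr as [e g]. unfold s1, s2 in *. cbn [fst snd] in *.
   set (T := (t + a - b)%Z) in *.
   assert (HT : IZR (a + c + e) - IZR (b + d + g) = 3 * IZR T) by (rewrite <- minus_IZR, <- mult_IZR; f_equal; lia).
   rewrite !plus_IZR in HT. unfold psub, padd, pscal; simpl. rewrite !minus_IZR, !opp_IZR, !plus_IZR.
   f_equal.
   + replace ((sqrt 3 / 2) * (1 / 3 * (IZR b * sqrt 3 / 2 + IZR d * sqrt 3 / 2 + IZR g * sqrt 3 / 2)))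
       with ((IZR b + IZR d + IZR g) * (sqrt 3 * sqrt 3) / 12) by field. rewrite s3s3. lra.
   + assert (ET : IZR T = (IZR a + IZR c + IZR e - (IZR b + IZR d + IZR g)) / 3) by lra.
     rewrite ET. field. Qed.

Lemma zeqb_true a b : zeqb a b = true <-> a = b.
Proof. destruct a, b; unfold zeqb; simpl. rewrite Bool.andb_true_iff, !Z.eqb_eq. split.
 intros [-> ->]; auto. intros E; inversion E; auto. Qed.

Lemma zeqb_q k z s : zeqb (qz k z) (qz k s) = zeqb z s.
Proof. destruct (zp_eq_dec z s). subst. rewrite (proj2 (zeqb_true s s) eq_refl), (proj2 (zeqb_true _ _) eq_refl); auto.
 destruct (zeqb z s) eqn:E. apply zeqb_true in E; congruence.
 destruct (zeqb (qz k z) (qz k s)) eqn:E2; auto. apply zeqb_true in E2. apply qz_inj in E2; congruence. Qed.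

Lemma upd_q k A s t : (fun z => upd A (qz k s) t (qz k z)) = upd (fun z => A (qz k z)) s t.
Proof. apply functional_extensionality; intros z. unfold upd. rewrite zeqb_q. auto. Qed.

Lemma partial_q k W s B : partial (qz k s) (fun A => W (fun z => A (qz k z))) B = partial s W (fun z => B (qz k z)).
Proof. unfold partial. f_equal. apply functional_extensionality; intro t. f_equal. apply upd_q. Qed.

Lemma q_in k Rs r : admissible_R k Rs -> In r Rs -> In (qz k r) Rs.
Proof. intros [_ [_ [_ [H _]]]] Hr. destruct (H r Hr) as [s [Hs E]]. rewrite <- emb_q in E.
 apply emb_inj in E. subst; auto. Qed.

Lemma V_sym k Rs V : admissible_R k Rs -> admissible_V k Rs V -> forall A, V A = V (fun z => A (qz k z)).
Proof. intros HR [_ [_ [HV _]]] A. apply HV. intros r s Hr Hs E. rewrite <- emb_q in E. apply emb_inj in E. subst; auto. Qed.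

Lemma hess_q k Rs V r s : admissible_R k Rs -> admissible_V k Rs V -> hess V (qz k r) (qz k s) = hess V r s.
Proof. intros HR HV. unfold hess.
 assert (E : partial (qz k s) V = fun B => partial s V (fun z => B (qz k z))).
 { apply functional_extensionality; intros B. rewrite <- partial_q. f_equal.
   apply functional_extensionality; intros A. apply (V_sym k Rs V HR HV). }
 rewrite E. apply (partial_q k (partial s V) r (fun _ => 0)). Qed.

Lemma sumR_q k Rs F : admissible_R k Rs -> sumR Rs F = sumR Rs (fun r => F (qz k r)).
Proof. intros HR. change (sumL Rs F = sumL Rs (fun r => F (qz k r))). rewrite <- (sumL_map (qz k) Rs F).
 apply sumL_perm. apply Permutation_sym. apply Permutation_map_same_l.
 apply FinFun.Injective_map_NoDup. intros x y; apply qz_inj. apply HR.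
 intros z Hz. apply in_map_iff in Hz. destruct Hz as [x [<- Hx]]. apply q_in; auto. Qed.

Definition gfun Rs V u := fun r y => sumR Rs (fun s => hess V r s * Dfd s u y).

Lemma f_formula Rs V u x : f_u Rs V u x = sumR Rs (fun r => gfun Rs V u r (zsub x r) - gfun Rs V u r x).
Proof. unfold f_u, divR. rewrite Ropp_involutive. reflexivity. Qed.

Lemma f_inv k Rs V u d : admissible_R k Rs -> admissible_V k Rs V ->
  (forall x, u (zadd (qz k x) d) = u x) ->
  forall x, f_u Rs V u (zadd (qz k x) d) = f_u Rs V u x.
Proof. intros HR HV Hu.
 set (l := fun x => zadd (qz k x) d).
 assert (HD : forall s y, Dfd (qz k s) u (l y) = Dfd s u y).
 { intros s y. unfold Dfd. rewrite <- (Hu y), <- (Hu (zadd y s)). f_equal. f_equal. unfold l. rewrite qz_add.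
   destruct (qz k y), (qz k s), d; unfold zadd; simpl; f_equal; lia. }
 assert (Hg : forall r y, gfun Rs V u (qz k r) (l y) = gfun Rs V u r y).
 { intros r y. unfold gfun. rewrite (sumR_q k Rs) by auto. f_equal. apply functional_extensionality; intros s.
   rewrite (hess_q k Rs), HD; auto. }
 intros x. fold (l x). rewrite !f_formula. rewrite (sumR_q k Rs) by auto. f_equal. apply functional_extensionality; intros r.
 replace (zsub (l x) (qz k r)) with (l (zsub x r)). rewrite !Hg. auto.
 unfold l. rewrite qz_sub. destruct (qz k x), (qz k r), d; unfold zadd, zsub; simpl; f_equal; lia. Qed.

Lemma CS l a : (sumL l a) ^ 2 <= INR (length l) * sumL l (fun x => a x ^ 2).
Proof. induction l. unfold sumL; simpl; lra. rewrite !sumL_cons. simpl length. rewrite S_INR.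
 set (s := sumL l a) in *. set (q := sumL l (fun x => a x ^ 2)) in *. set (n := INR (length l)) in *.
 assert (0 <= n) by apply pos_INR. assert (0 <= q) by (apply sumL_nonneg; intros; apply pow2_ge_0).
 destruct (Req_dec n 0) as [Hn|Hn].
 - rewrite Hn in IHl. assert (s = 0) by nra. rewrite H1, Hn. nra.
 - assert (n * (2 * a a0 * s) <= n * (q + n * a a0 ^ 2)).
   { assert (0 <= (n * a a0 - s)^2) by apply pow2_ge_0. nra. }
   assert (2 * a a0 * s <= q + n * a a0 ^ 2). { apply Rmult_le_reg_l with n. lra. lra. } nra. Qed.

Lemma g_l2 Rs V u : in_H1 Rs u ->
  abs_summable (fun x => sumR Rs (fun r => Rabs (gfun Rs V u r x)) ^ 2).
Proof. intros Hu.
 set (c := fun s => sumL Rs (fun r => Rabs (hess V r s))).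
 set (w := fun x => sumL Rs (fun s => c s * Rabs (Dfd s u x))).
 assert (Hb : forall x, sumR Rs (fun r => Rabs (gfun Rs V u r x)) <= w x).
 { intros x. unfold w, c. change (sumL Rs (fun r => Rabs (gfun Rs V u r x)) <= sumL Rs (fun s => sumL Rs (fun r => Rabs (hess V r s)) * Rabs (Dfd s u x))).
   eapply Rle_trans with (sumL Rs (fun r => sumL Rs (fun s => Rabs (hess V r s) * Rabs (Dfd s u x)))).
   apply sumL_le. intros r _. unfold gfun. eapply Rle_trans. apply sumL_abs. apply sumL_le. intros; rewrite Rabs_mult; lra.
   rewrite sumL_swap. apply sumL_le. intros s _. rewrite Rmult_comm, <- sumL_scal. apply sumL_le. intros; lra. }
 apply (abs_dom (fun x => INR (length Rs) * sumR Rs (fun s => c s ^ 2 * Dfd s u x ^ 2)) (fun _ => 0) _ (0%Z,0%Z)).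
 apply abs_scalL. apply abs_sumR. intros s Hs. apply abs_scalL. destruct (Hu s Hs) as [M HM]. exists M. intros N.
 eapply Rle_trans. 2: apply (HM N). apply sumL_le. intros. rewrite Rabs_right. 2: apply Rle_ge, pow2_ge_0.
 lra. apply abs_zero0.
 intros x _. rewrite Rabs_R0, Rplus_0_r. rewrite Rabs_right by (apply Rle_ge, pow2_ge_0).
 assert (0 <= sumR Rs (fun r => Rabs (gfun Rs V u r x))) by (apply sumL_nonneg; intros; apply Rabs_pos).
 assert (sumR Rs (fun r => Rabs (gfun Rs V u r x)) ^ 2 <= w x ^ 2) by (specialize (Hb x); nra).
 eapply Rle_trans. apply H0. eapply Rle_trans. apply CS.
 rewrite Rabs_right. apply Rmult_le_compat_l. apply pos_INR. apply sumL_le. intros s _.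
 rewrite Rpow_mult_distr. rewrite <- (pow2_abs (Dfd s u x)). lra.
 apply Rle_ge, Rmult_le_pos. apply pos_INR. apply sumL_nonneg. intros; apply Rmult_le_pos; apply pow2_ge_0. Qed.

Lemma fix1 k S1 S2 : S1 = q11 k * S1 + q12 k * S2 -> S2 = q21 k * S1 + q22 k * S2 -> S1 = 0 /\ S2 = 0.
Proof. destruct k; simpl; intros E1 E2. lra.
 assert (H := s3s3). set (s := sqrt 3) in *.
 assert (E3 : s * S2 = -3 * S1) by lra. assert (E4 : 3 * S2 = s * S1) by lra.
 assert (E5 : s * (3 * S2) = s * s * S1) by (rewrite E4; ring). rewrite H in E5.
 assert (S1 = 0) by lra. split; auto. subst S1. lra. Qed.

Lemma fix2 k a b c :
  a = q11 k * q11 k * a + 2 * q11 k * q12 k * b + q12 k * q12 k * c ->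
  c = q21 k * q21 k * a + 2 * q21 k * q22 k * b + q22 k * q22 k * c ->
  b = q11 k * q21 k * a + (q11 k * q22 k + q12 k * q21 k) * b + q12 k * q22 k * c -> a = c /\ b = 0.
Proof. destruct k; simpl; intros E1 E2 E3. lra.
 assert (H := s3s3). set (s := sqrt 3) in *.
 assert (Hb : s * s * b = 3 * b) by (rewrite H; ring).
 assert (Hc : s * s * c = 3 * c) by (rewrite H; ring).
 assert (Ha : s * s * a = 3 * a) by (rewrite H; ring).
 assert (B : b = s * (c - a) / 6) by lra.
 assert (SB : s * b = (c - a) / 2). { rewrite B. assert (s*s*(c-a) = 3*(c-a)) by (rewrite H; ring). lra. }
 assert (a = c) by lra. split; auto. rewrite B, H0. lra. Qed.

Definition Ex k x := fst (emb k x).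
Definition Ey k x := snd (emb k x).

Lemma moments1 k f l D1 D2 : good_map l -> (forall x, f (l x) = f x) ->
  (forall x, Ex k (l x) = q11 k * Ex k x + q12 k * Ey k x + D1) ->
  (forall x, Ey k (l x) = q21 k * Ex k x + q22 k * Ey k x + D2) ->
  abs_summable f -> abs_summable (fun x => f x * Ex k x) -> abs_summable (fun x => f x * Ey k x) ->
  has_sum f 0 -> has_sum (fun x => f x * Ex k x) 0 /\ has_sum (fun x => f x * Ey k x) 0.
Proof. intros Hg Hf H1 H2 A0 A1 A2 F0.
 destruct (exists_sum _ A1) as [S1 HS1]. destruct (exists_sum _ A2) as [S2 HS2].
 assert (C1 := has_sum_comp _ l _ Hg A1 HS1). assert (C2 := has_sum_comp _ l _ Hg A2 HS2).
 assert (L1 := has_sum_plus _ _ _ _ (has_sum_scal (q11 k) _ _ HS1) (has_sum_plus _ _ _ _ (has_sum_scal (q12 k) _ _ HS2) (has_sum_scal D1 _ _ F0))).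
 assert (L2 := has_sum_plus _ _ _ _ (has_sum_scal (q21 k) _ _ HS1) (has_sum_plus _ _ _ _ (has_sum_scal (q22 k) _ _ HS2) (has_sum_scal D2 _ _ F0))).
 assert (e1 : S1 = q11 k * S1 + (q12 k * S2 + D1 * 0)).
 { eapply has_sum_unique. apply C1. eapply has_sum_ext. 2: apply L1. intros x. simpl. rewrite Hf, H1. ring. }
 assert (e2 : S2 = q21 k * S1 + (q22 k * S2 + D2 * 0)).
 { eapply has_sum_unique. apply C2. eapply has_sum_ext. 2: apply L2. intros x. simpl. rewrite Hf, H2. ring. }
 destruct (fix1 k S1 S2) as [-> ->]; try lra. split; auto. Qed.

Lemma moments2 k f l D1 D2 : good_map l -> (forall x, f (l x) = f x) ->
  (forall x, Ex k (l x) = q11 k * Ex k x + q12 k * Ey k x + D1) ->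
  (forall x, Ey k (l x) = q21 k * Ex k x + q22 k * Ey k x + D2) ->
  has_sum f 0 -> has_sum (fun x => f x * Ex k x) 0 -> has_sum (fun x => f x * Ey k x) 0 ->
  abs_summable (fun x => f x * Ex k x * Ex k x) -> abs_summable (fun x => f x * Ex k x * Ey k x) ->
  abs_summable (fun x => f x * Ey k x * Ey k x) ->
  exists c, has_sum (fun x => f x * Ex k x * Ex k x) c /\ has_sum (fun x => f x * Ex k x * Ey k x) 0 /\
            has_sum (fun x => f x * Ey k x * Ey k x) c.
Proof. intros Hg Hf H1 H2 F0 F1 F2 A11 A12 A22.
 destruct (exists_sum _ A11) as [a Ha]. destruct (exists_sum _ A12) as [b Hb]. destruct (exists_sum _ A22) as [c Hc].
 assert (C11 := has_sum_comp _ l _ Hg A11 Ha). assert (C12 := has_sum_comp _ l _ Hg A12 Hb).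
 assert (C22 := has_sum_comp _ l _ Hg A22 Hc).
 assert (G : forall (c1 c2 c3 c4 c5 c6 : R), has_sum (fun x => c1 * (f x * Ex k x * Ex k x) + (c2 * (f x * Ex k x * Ey k x) +
    (c3 * (f x * Ey k x * Ey k x) + (c4 * (f x * Ex k x) + (c5 * (f x * Ey k x) + c6 * f x)))))
    (c1 * a + (c2 * b + (c3 * c + (c4 * 0 + (c5 * 0 + c6 * 0)))))).
 { intros. repeat apply has_sum_plus; apply has_sum_scal; auto. }
 set (p11 := q11 k) in *. set (p12 := q12 k) in *. set (p21 := q21 k) in *. set (p22 := q22 k) in *.
 assert (e1 : a = p11 * p11 * a + 2 * p11 * p12 * b + p12 * p12 * c).
 { assert (X := G (p11*p11) (2*p11*p12) (p12*p12) (2*p11*D1) (2*p12*D1) (D1*D1)).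
   replace (p11 * p11 * a + 2 * p11 * p12 * b + p12 * p12 * c) with
     (p11*p11 * a + (2*p11*p12 * b + (p12*p12 * c + (2*p11*D1 * 0 + (2*p12*D1 * 0 + D1*D1 * 0))))) by ring.
   eapply has_sum_unique. apply C11. eapply has_sum_ext. 2: apply X. intros x. simpl. rewrite Hf, H1. ring. }
 assert (e2 : c = p21 * p21 * a + 2 * p21 * p22 * b + p22 * p22 * c).
 { assert (X := G (p21*p21) (2*p21*p22) (p22*p22) (2*p21*D2) (2*p22*D2) (D2*D2)).
   replace (p21 * p21 * a + 2 * p21 * p22 * b + p22 * p22 * c) with
     (p21*p21 * a + (2*p21*p22 * b + (p22*p22 * c + (2*p21*D2 * 0 + (2*p22*D2 * 0 + D2*D2 * 0))))) by ring.
   eapply has_sum_unique. apply C22. eapply has_sum_ext. 2: apply X. intros x. simpl. rewrite Hf, H2. ring. }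
 assert (e3 : b = p11 * p21 * a + (p11 * p22 + p12 * p21) * b + p12 * p22 * c).
 { assert (X := G (p11*p21) (p11*p22 + p12*p21) (p12*p22) (p11*D2 + p21*D1) (p12*D2 + p22*D1) (D1*D2)).
   replace (p11 * p21 * a + (p11 * p22 + p12 * p21) * b + p12 * p22 * c) with
     (p11*p21 * a + ((p11*p22 + p12*p21) * b + (p12*p22 * c + ((p11*D2 + p21*D1) * 0 + ((p12*D2 + p22*D1) * 0 + D1*D2 * 0))))) by ring.
   eapply has_sum_unique. apply C12. eapply has_sum_ext. 2: apply X. intros x. simpl. rewrite Hf, H1, H2. ring. }
 destruct (fix2 k a b c e1 e2 e3) as [E B]. subst b. exists a. split; auto. split; auto. rewrite E; auto. Qed.

Lemma good_l k d : good_map (fun x => zadd (qz k x) d).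
Proof. split; [|split].
 - intros x y E. apply (qz_inj k). destruct (qz k x), (qz k y), d; unfold zadd in E; simpl in E; inversion E; f_equal; lia.
 - exists 2%nat, (Z.to_nat (Z.abs (fst d) + Z.abs (snd d))). intros N z Hz. apply in_box in Hz. apply in_box.
   destruct k, z, d; unfold zadd; simpl in *; lia.
 - exists (fun z => qi k (zsub z d)). split.
   + intros z. rewrite qz_qi. destruct z, d; unfold zadd, zsub; simpl; f_equal; lia.
   + exists 2%nat, (2 * Z.to_nat (Z.abs (fst d) + Z.abs (snd d)))%nat. intros N z Hz. apply in_box in Hz. apply in_box.
     destruct k, z, d; unfold zsub; simpl in *; lia. Qed.

Lemma dom1 a z : z <> 0%Z -> Rabs a <= Rabs (a * IZR z).
Proof. intros H. rewrite Rabs_mult. assert (1 <= Rabs (IZR z)) by (apply IZR_abs_ge1; auto).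
 assert (0 <= Rabs a) by apply Rabs_pos. nra. Qed.

Lemma dom2u (f : Z*Z -> R) (i j : Z*Z -> Z) :
  abs_summable (fun x => f x * IZR (i x)) -> abs_summable (fun x => f x * IZR (j x)) ->
  (forall x y, (i x = 0 /\ j x = 0)%Z -> (i y = 0 /\ j y = 0)%Z -> x = y) -> abs_summable f.
Proof. intros Hi Hj U.
 assert (K : forall z0, (forall x, x <> z0 -> i x <> 0%Z \/ j x <> 0%Z) -> abs_summable f).
 { intros z0 Hz. apply (abs_dom _ _ f z0 Hi Hj). intros x Hx. destruct (Hz x Hx) as [Q|Q].
   - assert (X := dom1 (f x) _ Q). assert (0 <= Rabs (f x * IZR (j x))) by apply Rabs_pos. lra.
   - assert (X := dom1 (f x) _ Q). assert (0 <= Rabs (f x * IZR (i x))) by apply Rabs_pos. lra. }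
 destruct (classic (exists z0, i z0 = 0%Z /\ j z0 = 0%Z)) as [[z0 Hz0]|Hn].
 - apply (K z0). intros x Hx. apply NNPP. intros Q. apply Hx. apply U; auto. lia.
 - apply (K (0%Z,0%Z)). intros x _. apply NNPP. intros Q. apply Hn. exists x. lia. Qed.

Lemma abs_lin (h a b c : Z*Z -> R) al be ga : (forall x, h x = al * a x + be * b x + ga * c x) ->
  abs_summable a -> abs_summable b -> abs_summable c -> abs_summable h.
Proof. intros E Ha Hb Hc. eapply abs_extL. intros x; symmetry; apply E.
 apply abs_plusL. apply abs_plusL. all: apply abs_scalL; auto. Qed.

Lemma emb_l_sq x d : emb Square (zadd (qz Square x) d) = (IZR (- snd x + fst d), IZR (fst x + snd d)).
Proof. destruct x, d; reflexivity. Qed.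
Lemma emb_l_tri x d : emb Triangular (zadd (qz Triangular x) d) =
  (IZR (- fst x - snd x + fst d) + IZR (fst x + snd d) / 2, IZR (fst x + snd d) * sqrt 3 / 2).
Proof. destruct x, d; reflexivity. Qed.

Section Der.
Variables (k : lattice_kind) (d : Z*Z) (f : Z*Z -> R).
Hypothesis Hf : forall x, f (zadd (qz k x) d) = f x.

Lemma comp_abs (w : Z*Z -> R) : abs_summable (fun x => f x * w x) -> abs_summable (fun x => f x * w (zadd (qz k x) d)).
Proof. intros A. eapply abs_extL. 2: apply (abs_compL _ _ (good_l k d) A). intros x; simpl. rewrite Hf; auto. Qed.

Lemma deriv_E1 : abs_summable (fun x => f x * Ex k x) -> abs_summable f /\ abs_summable (fun x => f x * Ey k x).
Proof. intros A. assert (B := comp_abs _ A). unfold Ex, Ey in *. destruct k.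
 - assert (B2 : abs_summable (fun x => f x * IZR (- snd x + fst d))) by (eapply abs_extL; [|apply B]; intros x; cbv beta; rewrite emb_l_sq; reflexivity).
   clear B; rename B2 into B. simpl in A.
   assert (A0 : abs_summable f).
   { apply (dom2u f (fun x => fst x) (fun x => (- snd x + fst d)%Z)); auto.
     intros [a b] [c e]; cbn [fst snd]; intros; f_equal; lia. }
   split; auto. simpl. eapply (abs_lin _ _ _ _ (-1) (IZR (fst d)) 0); [|exact B|exact A0|exact A0]; intros x; cbv beta.
   rewrite plus_IZR, opp_IZR. ring.
 - assert (B2 : abs_summable (fun x => f x * (IZR (- fst x - snd x + fst d) + IZR (fst x + snd d) / 2))) by (eapply abs_extL; [|apply B]; intros x; cbv beta; rewrite emb_l_tri; reflexivity).
   clear B; rename B2 into B. simpl in A.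
   assert (A' : abs_summable (fun x => f x * IZR (2 * fst x + snd x))).
   { eapply (abs_lin _ _ _ _ 2 0 0); [|exact A|exact A|exact A]; intros x; cbv beta. rewrite plus_IZR, mult_IZR. simpl. field. }
   assert (B' : abs_summable (fun x => f x * IZR (- fst x - 2 * snd x + (2 * fst d + snd d)))).
   { eapply (abs_lin _ _ _ _ 2 0 0); [|exact B|exact B|exact B]; intros x; cbv beta. rewrite ?plus_IZR, ?minus_IZR, ?mult_IZR, ?opp_IZR, ?plus_IZR, ?minus_IZR, ?mult_IZR, ?opp_IZR. simpl. field. }
   assert (A0 : abs_summable f).
   { apply (dom2u f _ _ A' B'). intros [a b] [c e]; cbn [fst snd]; intros; f_equal; lia. }
   split; auto. simpl.
   eapply (abs_lin _ _ _ _ (- sqrt 3 / 6) (- sqrt 3 / 3) (sqrt 3 / 3 * IZR (2 * fst d + snd d))); [|exact A'|exact B'|exact A0]; intros x; cbv beta.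
   rewrite ?plus_IZR, ?minus_IZR, ?mult_IZR, ?opp_IZR, ?plus_IZR, ?minus_IZR, ?mult_IZR, ?opp_IZR. simpl. field. Qed.

Lemma deriv_E2 : abs_summable (fun x => f x * Ey k x) -> abs_summable f /\ abs_summable (fun x => f x * Ex k x).
Proof. intros A. assert (B := comp_abs _ A). unfold Ex, Ey in *. destruct k.
 - assert (B2 : abs_summable (fun x => f x * IZR (fst x + snd d))) by (eapply abs_extL; [|apply B]; intros x; cbv beta; rewrite emb_l_sq; reflexivity).
   clear B; rename B2 into B. simpl in A.
   assert (A0 : abs_summable f).
   { apply (dom2u f (fun x => snd x) (fun x => (fst x + snd d)%Z)); auto.
     intros [a b] [c e]; cbn [fst snd]; intros; f_equal; lia. }
   split; auto. simpl. eapply (abs_lin _ _ _ _ 1 (- IZR (snd d)) 0); [|exact B|exact A0|exact A0]; intros x; cbv beta.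
   rewrite plus_IZR. ring.
 - assert (B2 : abs_summable (fun x => f x * (IZR (fst x + snd d) * sqrt 3 / 2))) by (eapply abs_extL; [|apply B]; intros x; cbv beta; rewrite emb_l_tri; reflexivity).
   clear B; rename B2 into B. simpl in A.
   assert (S3 := s3pos).
   assert (A' : abs_summable (fun x => f x * IZR (snd x))).
   { eapply (abs_lin _ _ _ _ (2 / sqrt 3) 0 0); [|exact A|exact A|exact A]; intros x; cbv beta. field. lra. }
   assert (B' : abs_summable (fun x => f x * IZR (fst x + snd d))).
   { eapply (abs_lin _ _ _ _ (2 / sqrt 3) 0 0); [|exact B|exact B|exact B]; intros x; cbv beta. field. lra. }
   assert (A0 : abs_summable f).
   { apply (dom2u f _ _ A' B'). intros [a b] [c e]; cbn [fst snd]; intros; f_equal; lia. }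
   split; auto. simpl.
   eapply (abs_lin _ _ _ _ 1 (1/2) (- IZR (snd d))); [|exact B'|exact A'|exact A0]; intros x; cbv beta.
   rewrite !plus_IZR. field. Qed.
End Der.

Lemma sq_ge1 k x : x <> (0%Z, 0%Z) -> 1 <= Ex k x * Ex k x + Ey k x * Ey k x.
Proof. intros H. destruct x as [m n]. unfold Ex, Ey; destruct k; simpl.
 - rewrite <- !mult_IZR, <- plus_IZR. apply IZR_le.
   destruct (Z.eq_dec m 0); destruct (Z.eq_dec n 0); subst; try congruence; nia.
 - replace ((IZR m + IZR n / 2) * (IZR m + IZR n / 2) + IZR n * sqrt 3 / 2 * (IZR n * sqrt 3 / 2))
     with (IZR m * IZR m + IZR m * IZR n + IZR n * IZR n * ((1 + sqrt 3 * sqrt 3) / 4)) by field.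
   rewrite s3s3. rewrite <- !mult_IZR. replace ((1 + 3) / 4) with 1 by field. rewrite Rmult_1_r.
   rewrite <- !plus_IZR. apply IZR_le.
   destruct (Z.eq_dec m 0); destruct (Z.eq_dec n 0); subst; try congruence; nia. Qed.

Lemma num_dom a e1 e2 : 1 <= e1 * e1 + e2 * e2 ->
  Rabs a <= Rabs (a * e1 * e1) + Rabs (a * e2 * e2) /\
  Rabs (a * e1) <= Rabs (a * e1 * e1) + Rabs (a * e2 * e2) /\
  Rabs (a * e2) <= Rabs (a * e1 * e1) + Rabs (a * e2 * e2).
Proof. intros H. rewrite !Rabs_mult. assert (Rabs e1 * Rabs e1 = e1 * e1) by (rewrite <- Rabs_mult; apply Rabs_right; nra).
 assert (Rabs e2 * Rabs e2 = e2 * e2) by (rewrite <- Rabs_mult; apply Rabs_right; nra).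
 assert (0 <= Rabs a) by apply Rabs_pos. assert (0 <= Rabs e1) by apply Rabs_pos. assert (0 <= Rabs e2) by apply Rabs_pos.
 assert (Rabs e1 <= e1 * e1 + e2 * e2) by (destruct (Rle_lt_dec (Rabs e1) 1); nra).
 assert (Rabs e2 <= e1 * e1 + e2 * e2) by (destruct (Rle_lt_dec (Rabs e2) 1); nra).
 repeat split; nra. Qed.

Lemma deriv_2nd k f : abs_summable (fun x => f x * Ex k x * Ex k x) -> abs_summable (fun x => f x * Ey k x * Ey k x) ->
  abs_summable f /\ abs_summable (fun x => f x * Ex k x) /\ abs_summable (fun x => f x * Ey k x).
Proof. intros A B. repeat split.
 - apply (abs_dom _ _ f (0%Z,0%Z) A B). intros x Hx. apply num_dom. apply sq_ge1; auto.
 - apply (abs_dom _ _ _ (0%Z,0%Z) A B). intros x Hx. apply num_dom. apply sq_ge1; auto.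
 - apply (abs_dom _ _ _ (0%Z,0%Z) A B). intros x Hx. apply num_dom. apply sq_ge1; auto. Qed.

Theorem theorem5p9 (k : lattice_kind) (xh : R * R) (Rs : list (Z * Z))
  (V : (Z * Z -> R) -> R) (u : Z * Z -> R) :
  is_centre k xh ->
  admissible_R k Rs ->
  admissible_V k Rs V ->
  in_H1 Rs u ->
  (forall x y : Z * Z, emb k y = Lmap k xh (emb k x) -> u y = u x) ->
  let f := f_u Rs V u in
  (abs_summable f -> has_sum f 0) /\
  ((abs_summable (fun x => f x * fst (emb k x)) ->
      has_sum (fun x => f x * fst (emb k x)) 0) /\
   (abs_summable (fun x => f x * snd (emb k x)) ->
      has_sum (fun x => f x * snd (emb k x)) 0)) /\
  (abs_summable (fun x => f x * fst (emb k x) * fst (emb k x)) ->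
   abs_summable (fun x => f x * fst (emb k x) * snd (emb k x)) ->
   abs_summable (fun x => f x * snd (emb k x) * snd (emb k x)) ->
   exists c : R,
     has_sum (fun x => f x * fst (emb k x) * fst (emb k x)) c /\
     has_sum (fun x => f x * fst (emb k x) * snd (emb k x)) 0 /\
     has_sum (fun x => f x * snd (emb k x) * fst (emb k x)) 0 /\
     has_sum (fun x => f x * snd (emb k x) * snd (emb k x)) c).
Proof.
 intros Hc HR HV Hu Hsym f.
 destruct (centre_d k xh Hc) as [d Hd].
 assert (Hul : forall x, u (zadd (qz k x) d) = u x).
 { intros x. apply Hsym. symmetry. apply lmap_emb; auto. }
 assert (Hf : forall x, f (zadd (qz k x) d) = f x) by (apply f_inv; auto).
 assert (P1 : abs_summable f -> has_sum f 0).
 { intros A. apply (div_sum_zero Rs (gfun Rs V u) f); auto. intros x; apply f_formula. apply g_l2; auto. }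
 assert (Hg := good_l k d).
 assert (H1 : forall x, Ex k (zadd (qz k x) d) = q11 k * Ex k x + q12 k * Ey k x + fst (emb k d)).
 { intros x. unfold Ex, Ey. rewrite emb_add, emb_q. unfold padd; simpl fst. rewrite Qrot_fst. auto. }
 assert (H2 : forall x, Ey k (zadd (qz k x) d) = q21 k * Ex k x + q22 k * Ey k x + snd (emb k d)).
 { intros x. unfold Ex, Ey. rewrite emb_add, emb_q. unfold padd; simpl snd. rewrite Qrot_snd. auto. }
 split; [exact P1|]. split; [split|].
 - intros A. destruct (deriv_E1 k d f Hf A) as [A0 A2].
   exact (proj1 (moments1 k f _ _ _ Hg Hf H1 H2 A0 A A2 (P1 A0))).
 - intros A. destruct (deriv_E2 k d f Hf A) as [A0 A1].
   exact (proj2 (moments1 k f _ _ _ Hg Hf H1 H2 A0 A1 A (P1 A0))).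
 - intros A11 A12 A22. destruct (deriv_2nd k f A11 A22) as [A0 [A1 A2]].
   destruct (moments1 k f _ _ _ Hg Hf H1 H2 A0 A1 A2 (P1 A0)) as [F1 F2].
   destruct (moments2 k f _ _ _ Hg Hf H1 H2 (P1 A0) F1 F2 A11 A12 A22) as [c [C1 [C2 C3]]].
   exists c. split; [exact C1|]. split; [exact C2|]. split; [|exact C3].
   eapply has_sum_ext; [|exact C2]. intros x; unfold Ex, Ey; ring.
Qed.
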